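(* Let $\boldsymbol{u}^\star\in\mathbb{R}^n\setminus\{\boldsymbol{0}\}$ and $f(\boldsymbol{u})=\frac12\|\boldsymbol{u}\boldsymbol{u}^{\mathrm T}-\boldsymbol{u}^\star{\boldsymbol{u}^\star}^{\mathrm T}\|_1$ on $\mathbb{R}^n$. Let $\boldsymbol{u}\ne\boldsymbol{0}$ be a spurious stationary point of $f$. Then $$\{\boldsymbol{w}\in\mathbb{R}^n:df(\boldsymbol{u})(\boldsymbol{w})=0\}=\prod_{j=1}^n C_j,\qquad C_j=\begin{cases}\operatorname{sgn}(u_j)\cdot\mathbb{R}_-, & j\in\operatorname{supp}(\boldsymbol{u}^\star),\ |u_j|=|u_j^\star|,\\ \mathbb{R}, & j\in\operatorname{supp}(\boldsymbol{u}^\star),\ |u_j|<|u_j^\star|,\\ \{0\}, & j\notin\operatorname{supp}(\boldsymbol{u}^\star).\end{cases}$$ Moreover, $\{\boldsymbol{w}:df(\boldsymbol{0})(\boldsymbol{w})=0\}=\mathbb{R}^n$.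
   Context: $\|\cdot\|_1$ is the entrywise $\ell_1$-norm. $\operatorname{supp}(\boldsymbol{x})=\{i:x_i\ne0\}$, $\mathbb{R}_-=\{x\le0\}$. $df(\boldsymbol{x})(\boldsymbol{w})=\lim_{t\searrow0}(f(\boldsymbol{x}+t\boldsymbol{w})-f(\boldsymbol{x}))/t$. A point $\boldsymbol{u}$ is stationary if $\boldsymbol{0}\in\partial f(\boldsymbol{u})$, where $\partial f(\boldsymbol{u})=\{\boldsymbol{Z}\boldsymbol{u}:\boldsymbol{Z}\text{ symmetric}, \boldsymbol{Z}\in\operatorname{Sign}(\boldsymbol{u}\boldsymbol{u}^{\mathrm T}-\boldsymbol{u}^\star{\boldsymbol{u}^\star}^{\mathrm T})\}$ (entrywise set-valued sign, $\operatorname{Sign}(0)=[-1,1]$) is the (Fréchet = limiting = Clarke) subdifferential; it is spurious if additionally $\boldsymbol{u}\notin\{\boldsymbol{u}^\star,-\boldsymbol{u}^\star\}$. *)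

(* Defs.v *)
From HB Require Import structures.
From mathcomp Require Import all_boot all_order all_algebra.
From mathcomp Require Import all_classical all_reals all_analysis.
Set Implicit Arguments. Unset Strict Implicit. Unset Printing Implicit Defensive.
Import Order.TTheory GRing.Theory Num.Theory.
Import numFieldNormedType.Exports.
Local Open Scope classical_set_scope.
Local Open Scope ring_scope.

Definition l1norm {R : realType} {m n : nat} (A : 'M[R]_(m, n)) : R :=
  \sum_(i < m) \sum_(j < n) `|A i j|.

Definition fobj {R : realType} {n : nat} (ustar u : 'cV[R]_n) : R :=
  2^-1 * l1norm (u *m u^T - ustar *m ustar^T).

Definition SignSet {R : realType} (x : R) : set R :=
  [set y | (0 < x -> y = 1) /\ (x < 0 -> y = -1) /\ (x = 0 -> -1 <= y <= 1)].

Definition subdiff {R : realType} {n : nat} (ustar u : 'cV[R]_n) : set 'cV[R]_n :=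
  [set Z *m u | Z in [set Z : 'M[R]_n | Z^T = Z /\
      forall i j, SignSet ((u *m u^T - ustar *m ustar^T) i j) (Z i j)]].

Definition stationary {R : realType} {n : nat} (ustar u : 'cV[R]_n) : Prop :=
  subdiff ustar u 0.

Definition spurious_stationary {R : realType} {n : nat} (ustar u : 'cV[R]_n) : Prop :=
  stationary ustar u /\ u <> ustar /\ u <> - ustar.

Definition dirderiv_zero {R : realType} {n : nat} (F : 'cV[R]_n -> R) (u w : 'cV[R]_n) : Prop :=
  (fun t : R => (F (u + t *: w) - F u) / t) @ 0^'+ --> 0.

Definition Cj {R : realType} {n : nat} (ustar u : 'cV[R]_n) (j : 'I_n) : set R :=
  if ustar j 0 == 0 then [set 0]
  else if `|u j 0| == `|ustar j 0| then [set Num.sg (u j 0) * r | r in [set r : R | r <= 0]]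
  else [set: R].

(* Main.v *)
Require Import Defs.
From HB Require Import structures.
From mathcomp Require Import all_boot all_order all_algebra.
From mathcomp Require Import all_classical all_reals all_analysis.
From mathcomp Require Import ring lra.
Import Order.TTheory GRing.Theory Num.Theory.
Import numFieldNormedType.Exports.
Local Open Scope classical_set_scope.
Local Open Scope ring_scope.

Definition phi {R : realType} (r a : R) := if r == 0 then `|a| else Num.sg r * a.

Lemma entry_bound (R : realType) (r a b t : R) : 0 < t -> t <= 1 ->
  `|(`|r + t*a + t^+2*b| - `|r|)/t - phi r a| <= t * (`|b| + (`|a| + `|b|)^+2 / `|r|).
Proof.
move=> t0 t1; rewrite /phi; have tn0 : t != 0 by rewrite gt_eqF.
case: eqP => [->|/eqP r0].
  rewrite normr0 invr0 mulr0 addr0 subr0 add0r.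
  have -> : t * a + t ^+ 2 * b = t * (a + t * b) by ring.
  rewrite normrM (gtr0_norm t0) mulrAC divff // mul1r.
  apply: le_trans (ler_dist_dist _ _) _.
  by rewrite addrAC subrr add0r normrM (gtr0_norm t0).
set c := a + t * b.
have -> : r + t * a + t ^+ 2 * b = r + t * c by rewrite /c; ring.
have hc : `|c| <= `|a| + `|b|.
  apply: le_trans (ler_normD _ _) _; rewrite lerD2l normrM (gtr0_norm t0).
  by rewrite -[X in _ <= X]mul1r ler_wpM2r.
set d := `|r + t * c| - `|r| - Num.sg r * t * c.
have hd : 0 <= d /\ d * `|r| <= t^+2 * c^+2.
  rewrite /d; move: (r0); rewrite neq_lt => /orP[hr|hr]; last first.
    rewrite gtr0_sg // (gtr0_norm hr) mul1r.
    case: (lerP 0 (r + t * c)) => h.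
      rewrite (ger0_norm h); split; nra.
    rewrite (ltr0_norm h); split; nra.
  rewrite ltr0_sg // (ltr0_norm hr).
  case: (lerP 0 (r + t * c)) => h.
    rewrite (ger0_norm h); split; nra.
  rewrite (ltr0_norm h); split; nra.
have -> : (`|r + t * c| - `|r|) / t - Num.sg r * a = d / t + Num.sg r * t * b.
  rewrite /d /c; field; exact: tn0.
have rp : 0 < `|r| by rewrite normr_gt0.
apply: le_trans (ler_normD _ _) _.
rewrite mulrDr addrC; apply: lerD.
  by rewrite !normrM normr_sg r0 mul1r (gtr0_norm t0).
case: hd => hd0 hd.
rewrite ger0_norm; last by rewrite divr_ge0 // ltW.
have : c ^+ 2 <= (`|a| + `|b|) ^+ 2.
  rewrite -real_normK ?num_real //; apply: lerXn2r; rewrite ?nnegrE // ?addr_ge0 //.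
move=> hc2.
have : t^+2 * c^+2 <= t^+2 * (`|a| + `|b|) ^+ 2 by rewrite ler_wpM2l // sqr_ge0.
move=> h2.
have hd' : d <= t^+2 * (`|a|+`|b|)^+2 / `|r| by rewrite ler_pdivlMr //; lra.
rewrite ler_pdivrMr //; apply: le_trans hd' _.
by rewrite le_eqVlt; apply/orP; left; apply/eqP; field; rewrite gt_eqF.
Qed.

Lemma cvg_lin (R : realType) (g : R -> R) (L K : R) :
  (forall t, 0 < t -> t <= 1 -> `|g t - L| <= t * K) -> g x @[x --> 0^'+] --> L.
Proof.
move=> H; apply/cvgrPdist_lt => e e0.
have K1 : 0 < `|K| + 1 by rewrite ltr_wpDl.
near=> t.
have t0 : 0 < t by near: t; exact: nbhs_right_gt.
have t1 : t <= 1 by near: t; exact: nbhs_right_le.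
have te : t < e / (`|K| + 1) by near: t; apply: nbhs_right_lt; rewrite divr_gt0.
rewrite distrC; apply: le_lt_trans (H t t0 t1) _.
move: te; rewrite ltr_pdivlMr // => te.
apply: le_lt_trans te; rewrite mulrDr mulr1 -[X in X <= _]addr0 lerD //.
  by apply: ler_wpM2l; [exact: ltW | exact: ler_norm].
Unshelve. all: by end_near.
Qed.

Definition Rm {R : realType} {n} (s u : 'cV[R]_n) i j := u i 0 * u j 0 - s i 0 * s j 0.
Definition am {R : realType} {n} (u w : 'cV[R]_n) i j := u i 0 * w j 0 + w i 0 * u j 0.
Definition bm {R : realType} {n} (w : 'cV[R]_n) (i j : 'I_n) := w i 0 * w j 0.
Definition Dval {R : realType} {n} (s u w : 'cV[R]_n) :=
  2^-1 * \sum_i \sum_j phi (Rm s u i j) (am u w i j).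

Lemma entryE (R : realType) n (s u : 'cV[R]_n) i j :
  (u *m u^T - s *m s^T) i j = Rm s u i j.
Proof. by rewrite !mxE !big_ord1 !mxE. Qed.

Lemma quotE (R : realType) n (s u w : 'cV[R]_n) t :
  (fobj s (u + t *: w) - fobj s u) / t =
  2^-1 * \sum_i \sum_j (`|Rm s u i j + t * am u w i j + t^+2 * bm w i j| - `|Rm s u i j|) / t.
Proof.
rewrite /fobj /l1norm -mulrBr -sumrB -mulrA; congr (_ * _).
rewrite mulr_suml; apply: eq_bigr => i _.
rewrite -sumrB mulr_suml; apply: eq_bigr => j _.
rewrite !entryE; congr ((`|_| - _) / _).
rewrite /Rm /am /bm !mxE; ring.
Qed.

Lemma dd_cvg (R : realType) n (s u w : 'cV[R]_n) :
  (fun t => (fobj s (u + t *: w) - fobj s u) / t) @ 0^'+ --> Dval s u w.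
Proof.
apply: (@cvg_lin _ _ _ (2^-1 * \sum_i \sum_j (`|bm w i j| +
   (`|am u w i j| + `|bm w i j|)^+2 / `|Rm s u i j|))).
move=> t t0 t1; rewrite quotE /Dval -mulrBr normrM ger0_norm ?invr_ge0 //.
rewrite mulrCA ler_pM2l ?invr_gt0 // -sumrB mulr_sumr.
apply: le_trans (ler_norm_sum _ _ _) _; apply: ler_sum => i _.
rewrite -sumrB mulr_sumr.
apply: le_trans (ler_norm_sum _ _ _) _; apply: ler_sum => j _.
exact: entry_bound.
Qed.

Lemma dd_iff (R : realType) n (s u w : 'cV[R]_n) :
  dirderiv_zero (fobj s) u w <-> Dval s u w = 0.
Proof.
split => [H|H]; last by move: (@dd_cvg R n s u w); rewrite H.
exact: (cvg_unique _ (@dd_cvg R n s u w) H).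
Qed.

Set Implicit Arguments. Unset Strict Implicit. Unset Printing Implicit Defensive.

Lemma SS_pos (R : realType) (r z : R) : SignSet r z -> 0 < r -> z = 1.
Proof. by case=> h _ /h. Qed.
Lemma SS_neg (R : realType) (r z : R) : SignSet r z -> r < 0 -> z = -1.
Proof. by case=> _ [h _] /h. Qed.
Lemma SS_bnd (R : realType) (r z : R) : SignSet r z -> -1 <= z <= 1.
Proof.
case=> h1 [h2 h3]; case: (ltgtP r 0) => hr.
- by rewrite (h2 hr); apply/andP; split; lra.
- by rewrite (h1 hr); apply/andP; split; lra.
- exact: h3.
Qed.

Definition Hyp (R : realType) n (x p : 'I_n -> R) (Z : 'I_n -> 'I_n -> R) :=
 [/\ (forall i, 0 <= p i), (forall i, p i = 0 -> x i = 0), (forall i j, Z i j = Z j i),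
     (forall i j, SignSet (x i * x j - p i * p j) (Z i j)) &
     (forall i, \sum_j Z i j * x j = 0)].

Lemma Hyp_opp (R : realType) n (x p : 'I_n -> R) Z :
  Hyp x p Z -> Hyp (fun i => - x i) p Z.
Proof.
case=> h1 h2 h3 h4 h5; split => //.
- by move=> i /h2 ->; rewrite oppr0.
- by move=> i j; rewrite mulrNN.
- move=> i; under eq_bigr do rewrite mulrN.
  by rewrite sumrN h5 oppr0.
Qed.

Lemma rowF4 (R : realType) n (x p : 'I_n -> R) Z (M : R) k :
  Hyp x p Z -> 0 < M -> (forall j, `|x j| <= M * p j) -> 0 < p k ->
  M * `|x k| < p k -> \sum_j x j = 0.
Proof.
case=> h1 h2 h3 h4 h5 M0 hM pk hk.
suff e : \sum_j Z k j * x j = \sum_j - x j.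
  by move: (h5 k); rewrite e sumrN => /eqP; rewrite oppr_eq0 => /eqP.
apply: eq_bigr => j _.
have [pj0|pj0] := eqVneq (p j) 0.
  by rewrite (h2 _ pj0) mulr0 oppr0.
have pj : 0 < p j by rewrite lt_def pj0 h1.
rewrite (SS_neg (h4 k j)) ?mulN1r //.
have : `|x k * x j| < p k * p j.
  rewrite normrM; have := hM j; have := normr_ge0 (x j); have := normr_ge0 (x k).
  nra.
move=> h; rewrite subr_lt0; apply: le_lt_trans h; exact: ler_norm.
Qed.

Lemma termL (R : realType) n (x p : 'I_n -> R) Z (M : R) i j :
  Hyp x p Z -> 1 < M -> x i = M * p i ->
  p i * (Z i j * x j) = p i * ((if p j < M * x j then x j else 0) -
     (if M * x j < p j then x j else 0)) +
     (if M * x j == p j then Z i j * p i * p j else 0) / M.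
Proof.
case=> h1 h2 h3 h4 h5 M1 hi.
have M0 : M != 0 by rewrite gt_eqF // (lt_trans ltr01).
have [pi0|pi0] := eqVneq (p i) 0.
  by rewrite pi0 !mul0r mulr0 add0r; case: ifP; rewrite ?mul0r ?mulr0.
have pi : 0 < p i by rewrite lt_def pi0 h1.
have e : x i * x j - p i * p j = p i * (M * x j - p j) by rewrite hi; ring.
have [h|h|h] := ltgtP (M * x j) (p j).
- rewrite mul0r addr0 add0r.
  rewrite (SS_neg (h4 i j)) ?e; first ring.
  by rewrite pmulr_rlt0 // subr_lt0.
- rewrite mul0r addr0 subr0.
  rewrite (SS_pos (h4 i j)) ?e; first ring.
  by rewrite pmulr_rgt0 // subr_gt0.
- rewrite subrr mulr0 add0r -h; field; exact: M0.
Qed.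

Lemma termB (R : realType) n (x p : 'I_n -> R) Z (M : R) k j :
  Hyp x p Z -> 1 < M -> M * x k = p k -> x j <= M * p j ->
  p k * (Z k j * x j) = - p k * (if x j < M * p j then x j else 0) +
     M * (if x j == M * p j then Z k j * p k * p j else 0).
Proof.
case=> h1 h2 h3 h4 h5 M1 hk hj.
have M0 : 0 < M by rewrite (lt_trans ltr01).
have [pk0|pk0] := eqVneq (p k) 0.
  by rewrite pk0 !(mul0r, mulr0, oppr0, add0r) if_same mulr0.
have pk : 0 < p k by rewrite lt_def pk0 h1.
have xk : 0 < x k by rewrite -(pmulr_rgt0 _ M0) hk.
have e : x k * x j - p k * p j = x k * (x j - M * p j) by rewrite -hk; ring.
move: hj; rewrite le_eqVlt => /orP[/eqP h|h].
- rewrite h ltxx eqxx mulr0 add0r; ring.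
- rewrite h (lt_eqF h) mulr0 addr0.
  rewrite (SS_neg (h4 k j)) ?e; first ring.
  by rewrite pmulr_rlt0 // subr_lt0.
Qed.

Lemma sum_if_mul (R : realType) n (c : pred 'I_n) (f : 'I_n -> R) (a : R) :
  \sum_i (if c i then f i * a else 0) = (\sum_i (if c i then f i else 0)) * a.
Proof. by rewrite mulr_suml; apply: eq_bigr => i _; case: (c i); rewrite ?mul0r. Qed.

Lemma sum_if_split (R : realType) n (c : pred 'I_n) (f g : 'I_n -> R) :
  \sum_i (if c i then f i + g i else 0) =
  \sum_i (if c i then f i else 0) + \sum_i (if c i then g i else 0).
Proof. rewrite -big_split /=; apply: eq_bigr => i _; by case: (c i); rewrite ?addr0. Qed.

Lemma sum_ge_term (R : realType) n (f : 'I_n -> R) i0 :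
  (forall i, 0 <= f i) -> f i0 <= \sum_i f i.
Proof.
move=> h; rewrite (bigD1 i0) //= lerDl; apply: sumr_ge0 => i _; exact: h.
Qed.

Lemma core (R : realType) n (x p : 'I_n -> R) Z (M : R) i0 :
  Hyp x p Z -> 1 < M -> (forall j, `|x j| <= M * p j) -> 0 < p i0 ->
  x i0 = M * p i0 -> False.
Proof.
move=> H M1 hM pi0 xi0; case: (H) => h1 h2 h3 h4 h5.
have M0 : 0 < M by rewrite (lt_trans ltr01).
have hle : forall j, x j <= M * p j by move=> j; exact: le_trans (ler_norm _) (hM j).
pose P := \sum_j (if p j < M * x j then x j else 0).
pose Q := \sum_j (if M * x j < p j then x j else 0).
pose pB := \sum_j (if M * x j == p j then p j else 0).
pose pL := \sum_j (if x j == M * p j then p j else 0).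
pose X := \sum_j (if x j < M * p j then x j else 0).
pose W := \sum_i \sum_j (if x i == M * p i then
              (if M * x j == p j then Z i j * p i * p j else 0) else 0).
pose S := \sum_j x j.
have F1 : pL * (P - Q) + W / M = 0.
  have e0 : \sum_i (if x i == M * p i then p i * \sum_j Z i j * x j else 0) = 0.
    by apply: big1 => i _; rewrite h5 mulr0 if_same.
  rewrite -e0.
  have -> : W / M = \sum_i (if x i == M * p i then
     (\sum_j (if M * x j == p j then Z i j * p i * p j else 0)) / M else 0).
    rewrite /W mulr_suml; apply: eq_bigr => i _; case: ifP => // _.
    by rewrite big1 ?mul0r.
  rewrite /pL -sum_if_mul -sum_if_split; apply: eq_bigr => i _.
  case: ifP => // /eqP hi.
  symmetry; rewrite mulr_sumr /P /Q -sumrB mulr_sumr mulr_suml -big_split /=; apply: eq_bigr => j _.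
  exact: termL.
have F2 : - pB * X + M * W = 0.
  have e0 : \sum_k (if M * x k == p k then p k * \sum_j Z k j * x j else 0) = 0.
    by apply: big1 => i _; rewrite h5 mulr0 if_same.
  rewrite -e0.
  have -> : W = \sum_k (if M * x k == p k then
     (\sum_j (if x j == M * p j then Z k j * p k * p j else 0)) else 0).
    rewrite /W exchange_big /=; apply: eq_bigr => k _.
    case: ifP => hk.
      by apply: eq_bigr => j _; case: ifP => // _; rewrite h3; ring.
    by rewrite big1 // => j _; rewrite if_same.
  have e1 : - pB * X = \sum_k (if M * x k == p k then (- p k) * X else 0).
    rewrite sum_if_mul; congr (_ * _); rewrite /pB -sumrN.
    by apply: eq_bigr => k _; case: ifP; rewrite ?oppr0.
  have e2 : forall (c : pred 'I_n) (G : 'I_n -> R),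
      M * \sum_k (if c k then G k else 0) = \sum_k (if c k then M * G k else 0).
    by move=> c G; rewrite mulr_sumr; apply: eq_bigr => k _; case: ifP; rewrite ?mulr0.
  rewrite e1 e2 -sum_if_split.
  apply: eq_bigr => k _; case: ifP => // /eqP hk.
  symmetry; rewrite /X !mulr_sumr -big_split /=; apply: eq_bigr => j _.
  exact: termB.
have F3 : - (pL * pB) <= W.
  have -> : pL * pB = \sum_i \sum_j (if x i == M * p i then
              (if M * x j == p j then p i * p j else 0) else 0).
    rewrite /pL big_distrl; apply: eq_bigr => i _ /=.
    case: ifP => _; last by rewrite mul0r big1.
    by rewrite /pB mulr_sumr; apply: eq_bigr => j _; case: ifP; rewrite ?mulr0.
  rewrite -sumrN; apply: ler_sum => i _; rewrite -sumrN; apply: ler_sum => j _.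
  case: ifP => _; last by rewrite oppr0. case: ifP => _; last by rewrite oppr0.
  have := SS_bnd (h4 i j); move=> /andP[z1 _].
  have := mulr_ge0 (h1 i) (h1 j); nra.
have R1 : S = X + M * pL.
  rewrite /S /X /pL mulr_sumr -big_split /=; apply: eq_bigr => j _.
  have := hle j; rewrite le_eqVlt => /orP[/eqP e|e].
    by rewrite e ltxx eqxx add0r.
  by rewrite e (lt_eqF e) mulr0 addr0.
have R2 : S = P + Q + pB / M.
  rewrite /S /P /Q /pB mulr_suml -!big_split /=; apply: eq_bigr => j _.
  have [e|e|e] := ltgtP (M * x j) (p j).
  - by rewrite mul0r !addr0 add0r.
  - by rewrite mul0r !addr0.
  - by rewrite -e !add0r; field; rewrite gt_eqF.
have R3 : M * pL <= P.
  rewrite /pL /P mulr_sumr; apply: ler_sum => j _.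
  case: ifP => [/eqP e|_]; last first.
    rewrite mulr0; case: ifP => // h.
    have := h1 j; nra.
  have [pj0|pj0] := eqVneq (p j) 0.
    by rewrite pj0 mulr0; case: ifP => //; rewrite (h2 _ pj0).
  have pj : 0 < p j by rewrite lt_def pj0 h1.
  have -> : p j < M * x j.
    have h : 0 < (M - 1) * p j * (M + 1) by rewrite !mulr_gt0 // ?subr_gt0 ?addr_gt0.
    rewrite e; nra.
  by rewrite e.
have R4 : p i0 <= pL.
  have := @sum_ge_term R n (fun j => if x j == M * p j then p j else 0) i0.
  rewrite /= xi0 eqxx; apply => j; case: ifP => //.
have R5 : 0 <= pB by apply: sumr_ge0 => j _; case: ifP.
have W1 : W = - M * pL * (P - Q).
  have e : W = M * (W / M) by field; rewrite gt_eqF.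
  rewrite {1}e; have -> : W / M = - (pL * (P - Q)).
    by apply/eqP; rewrite -addr_eq0 addrC F1.
  ring.
have pL0 : 0 < pL by apply: lt_le_trans R4.
have G : P - Q <= pB / M.
  rewrite ler_pdivlMr //.
  have : pL * ((P - Q) * M - pB) <= 0 by move: F3; rewrite W1; lra.
  by rewrite pmulr_rle0 // subr_le0.
have PP : 0 < P by have := mulr_gt0 M0 pL0; lra.
have [[k [pk hk]]|nF] := pselect (exists k, 0 < p k /\ M * `|x k| < p k).
  have S0 : S = 0 by exact: (rowF4 H (lt_trans ltr01 M1) hM pk hk).
  lra.
have Q0 : Q <= 0.
  apply: sumr_le0 => j _; case: ifP => // h.
  have [pj0|pj0] := eqVneq (p j) 0; first by rewrite (h2 _ pj0).
  have pj : 0 < p j by rewrite lt_def pj0 h1.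
  have hj : p j <= M * `|x j|.
    by rewrite leNgt; apply/negP => hj; apply: nF; exists j.
  case: (lerP 0 (x j)) => hx; last exact: ltW.
    by move: h; rewrite (ger0_norm hx) in hj; lra.
have X0 : 0 < X by have := mulr_gt0 M0 pL0; lra.
have hA : 0 <= pB * X by rewrite mulr_ge0 // ltW.
have hB : M * W < 0.
  have PQ : 0 < P - Q by lra.
  have := mulr_gt0 (mulr_gt0 (mulr_gt0 M0 M0) pL0) PQ.
  rewrite W1; nra.
lra.
Qed.


Lemma absA (R : realType) n (x p : 'I_n -> R) Z :
  Hyp x p Z -> forall i, `|x i| <= p i.
Proof.
move=> H i1; case: (H) => h1 h2 h3 h4 h5.
rewrite leNgt; apply/negP => hi1.
have pi1 : 0 < p i1.
  rewrite lt_def h1 andbT; apply/eqP => e; move: hi1; rewrite e (h2 _ e) normr0 ltxx //.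
pose F := fun i => `|x i| / p i.
case: (@Order.TotalTheory.arg_maxP _ _ 'I_n i1 xpredT F isT) => i0 _ Hmax.
have Hm : forall j, F j <= F i0 by move=> j; exact: (Hmax j isT).
have M1 : 1 < F i0.
  apply: lt_le_trans (Hm i1); rewrite /F ltr_pdivlMr // mul1r //.
have pi0 : 0 < p i0.
  rewrite lt_def h1 andbT; apply/eqP => e; move: M1; rewrite /F e invr0 mulr0 ltr10 //.
have hM : forall j, `|x j| <= F i0 * p j.
  move=> j; have [pj0|pj0] := eqVneq (p j) 0.
    by rewrite pj0 (h2 _ pj0) normr0 mulr0.
  have pj : 0 < p j by rewrite lt_def pj0 h1.
  by rewrite -ler_pdivrMr //; exact: Hm.
have ex : `|x i0| = F i0 * p i0 by rewrite /F mulrVK // unitf_gt0.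
case: (lerP 0 (x i0)) => hx.
  by apply: (core H M1 hM pi0); rewrite -ex ger0_norm.
apply: (core (Hyp_opp H) M1 _ pi0).
  by move=> j; rewrite normrN.
by rewrite -ex ltr0_norm.
Qed.

Lemma absB (R : realType) n (x p : 'I_n -> R) Z :
  Hyp x p Z -> (exists i, x i != p i) -> (exists i, x i != - p i) -> \sum_j x j = 0.
Proof.
move=> H [ia hia] [ib hib]; have hA := absA H; case: (H) => h1 h2 h3 h4 h5.
have [[k [pk hk]]|nF] := pselect (exists k, 0 < p k /\ 1 * `|x k| < p k).
  by apply: (rowF4 H ltr01 _ pk hk) => j; rewrite mul1r.
have tight : forall k, 0 < p k -> `|x k| = p k.
  move=> k pk; apply/eqP; rewrite eq_le hA /= leNgt; apply/negP => hk.
  by apply: nF; exists k; rewrite mul1r.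
have pos : forall k, p k != 0 -> 0 < p k by move=> k pk0; rewrite lt_def pk0 h1.
have [pb0|pb0] := eqVneq (p ib) 0; first by move: hib; rewrite pb0 (h2 _ pb0) oppr0 eqxx.
have [pa0|pa0] := eqVneq (p ia) 0; first by move: hia; rewrite pa0 (h2 _ pa0) eqxx.
have xb : x ib = p ib.
  have := tight _ (pos _ pb0); case: (lerP 0 (x ib)) => hx.
    by rewrite ger0_norm.
  by rewrite ltr0_norm // => e; move: hib; rewrite -e opprK eqxx.
have xa : x ia = - p ia.
  have := tight _ (pos _ pa0); case: (lerP 0 (x ia)) => hx.
    by rewrite ger0_norm // => e; move: hia; rewrite e eqxx.
  by rewrite ltr0_norm // => <-; rewrite opprK.
have pb := pos _ pb0; have pa := pos _ pa0.
have G1 : \sum_j - x j <= 0.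
  suff : \sum_j - x j <= \sum_j Z ib j * x j by rewrite h5.
  apply: ler_sum => j _.
  have [pj0|pj0] := eqVneq (p j) 0; first by rewrite (h2 _ pj0) oppr0 mulr0.
  have pj := pos _ pj0; have := tight _ pj; have := SS_bnd (h4 ib j).
  move=> /andP[z1 z2]; case: (lerP 0 (x j)) => hx.
    rewrite ger0_norm // => _; nra.
  rewrite ltr0_norm // => e.
  rewrite (SS_neg (h4 ib j)) ?mulN1r // xb -e; nra.
have G2 : 0 <= \sum_j - x j.
  suff : \sum_j Z ia j * x j <= \sum_j - x j by rewrite h5.
  apply: ler_sum => j _.
  have [pj0|pj0] := eqVneq (p j) 0; first by rewrite (h2 _ pj0) oppr0 mulr0.
  have pj := pos _ pj0; have := tight _ pj; have := SS_bnd (h4 ia j).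
  move=> /andP[z1 z2]; case: (lerP 0 (x j)) => hx.
    rewrite ger0_norm // => e.
    rewrite (SS_neg (h4 ia j)) ?mulN1r // xa e; nra.
  move=> _; nra.
move: G1 G2; rewrite sumrN; lra.
Qed.

Lemma absC (R : realType) n (x p : 'I_n -> R) Z :
  Hyp x p Z -> \sum_j x j = 0 -> forall i j, 0 < p i -> 0 < p j ->
  x i = p i -> x j = p j -> Z i j = -1.
Proof.
move=> H S0 i j pi pj xi xj; have hA := absA H; case: (H) => h1 h2 h3 h4 h5.
have e : \sum_l Z i l * x l =
         \sum_l - x l + \sum_l (if x l == p l then (Z i l + 1) * p l else 0).
  rewrite -big_split /=; apply: eq_bigr => l _.
  case: ifP => [/eqP ->|/negbT hl]; first ring.
  have hl' : x l < p l by rewrite lt_neqAle hl (le_trans (ler_norm _) (hA l)).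
  rewrite (SS_neg (h4 i l)); first by rewrite addr0 mulN1r.
  by rewrite xi -mulrBr pmulr_rlt0 // subr_lt0.
move: (h5 i); rewrite e sumrN S0 oppr0 add0r => e2.
have nn : forall l, xpredT l -> 0 <= (if x l == p l then (Z i l + 1) * p l else 0).
  move=> l _; case: ifP => // _; apply: mulr_ge0 => //.
  by have := SS_bnd (h4 i l); move=> /andP[z1 _]; rewrite -lerBlDr sub0r.
have := @psumr_eq0P _ _ xpredT _ nn e2 j isT.
rewrite xj eqxx => /eqP; rewrite mulf_eq0 (gt_eqF pj) orbF addr_eq0 => /eqP //.
Qed.

Lemma sg_pm (R : realType) (x : R) : x != 0 -> Num.sg x = 1 \/ Num.sg x = -1.
Proof.
rewrite neq_lt => /orP[h|h]; [right; exact: ltr0_sg | left; exact: gtr0_sg].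
Qed.

Lemma SS_abs (R : realType) (r z : R) : SignSet r z -> z * r = `|r|.
Proof.
move=> H; case: (ltgtP r 0) => hr.
- by rewrite (SS_neg H hr) ltr0_norm // mulN1r.
- by rewrite (SS_pos H hr) gtr0_norm // mul1r.
- by rewrite hr mulr0 normr0.
Qed.

Lemma SS_sg (R : realType) (r z : R) : SignSet r z -> r != 0 -> z = Num.sg r.
Proof.
move=> H; rewrite neq_lt => /orP[h|h].
  by rewrite (SS_neg H h) ltr0_sg.
by rewrite (SS_pos H h) gtr0_sg.
Qed.

Lemma SS_scale (R : realType) (r z e : R) : SignSet r z ->
  e = 1 \/ e = -1 \/ e = 0 -> SignSet (e * r) (e * z).
Proof.
move=> H [->|[->|->]]; rewrite ?mul1r //.
- case: H => h1 [h2 h3]; split; [|split].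
  + by rewrite mulN1r oppr_gt0 => /h2 ->; lra.
  + by rewrite mulN1r oppr_lt0 => /h1 ->; lra.
  + rewrite mulN1r => /eqP; rewrite oppr_eq0 => /eqP /h3 /andP[a b].
    by apply/andP; split; lra.
- rewrite !mul0r; split; [by rewrite ltxx|split; first by rewrite ltxx].
  by move=> _; apply/andP; split; lra.
Qed.

Lemma fin_sign (R : realType) (ui uj si sj ri rj z : R) : ui != 0 -> uj != 0 ->
  ui * uj = si * sj -> ri <= 0 -> rj <= 0 -> Num.sg si * Num.sg sj * z = -1 ->
  z * (ui * (Num.sg uj * rj) + (Num.sg ui * ri) * uj) =
  `|ui * (Num.sg uj * rj) + (Num.sg ui * ri) * uj|.
Proof.
move=> ui0 uj0 e hri hrj; rewrite -sgrM -e sgrM.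
have ei := numEsg ui; have ej := numEsg uj.
have ai := normr_ge0 ui; have aj := normr_ge0 uj.
have [ti|ti] := sg_pm ui0; have [tj|tj] := sg_pm uj0; rewrite ti tj in ei ej *;
  rewrite ei ej => hz.
- have -> : z = -1 by lra.
  rewrite [`|_ + _|]ler0_norm; [ring | nra].
- have -> : z = 1 by lra.
  rewrite [`|_ + _|]ger0_norm; [ring | nra].
- have -> : z = 1 by lra.
  rewrite [`|_ + _|]ger0_norm; [ring | nra].
- have -> : z = -1 by lra.
  rewrite [`|_ + _|]ler0_norm; [ring | nra].
Qed.

Lemma term_nonneg (R : realType) (r z a : R) : SignSet r z -> 0 <= phi r a - z * a.
Proof.
move=> H; rewrite /phi; case: eqP => [e|/eqP r0].
  have /andP[z1 z2] := SS_bnd H; rewrite subr_ge0.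
  apply: le_trans (ler_norm _) _; rewrite normrM.
  have : `|z| <= 1 by rewrite ler_norml z1 z2.
  by move=> hz; rewrite -[X in _ <= X]mul1r ler_wpM2r.
by rewrite (SS_sg H r0) subrr.
Qed.

Lemma sumZa (R : realType) n (u w : 'cV[R]_n) (Z : 'M[R]_n) :
  (forall i j, Z i j = Z j i) -> (forall i, \sum_j Z i j * u j 0 = 0) ->
  \sum_i \sum_j Z i j * am u w i j = 0.
Proof.
move=> hs hr.
have -> : \sum_i \sum_j Z i j * am u w i j =
   \sum_i \sum_j w j 0 * (Z j i * u i 0) + \sum_i w i 0 * \sum_j Z i j * u j 0.
  rewrite -big_split /=; apply: eq_bigr => i _.
  rewrite mulr_sumr -big_split /=; apply: eq_bigr => j _.
  rewrite /am (hs j i); ring.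
rewrite exchange_big /=.
rewrite big1 ?add0r; last by move=> j _; rewrite -mulr_sumr hr mulr0.
by rewrite big1 // => i _; rewrite hr mulr0.
Qed.

Lemma Dval0 (R : realType) n (s u w : 'cV[R]_n) (Z : 'M[R]_n) :
  (forall i j, Z i j = Z j i) -> (forall i j, SignSet (Rm s u i j) (Z i j)) ->
  (forall i, \sum_j Z i j * u j 0 = 0) ->
  (Dval s u w = 0 <-> forall i j, phi (Rm s u i j) (am u w i j) = Z i j * am u w i j).
Proof.
move=> hs hS hr.
have e : Dval s u w = 2^-1 * \sum_i \sum_j (phi (Rm s u i j) (am u w i j) - Z i j * am u w i j).
  rewrite /Dval; congr (_ * _).
  symmetry; under eq_bigr do rewrite sumrB.
  by rewrite sumrB (sumZa w hs hr) subr0.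
have nn : forall i j, 0 <= phi (Rm s u i j) (am u w i j) - Z i j * am u w i j.
  by move=> i j; exact: term_nonneg.
rewrite e; split => [H i j|H].
  have H' : \sum_i \sum_j (phi (Rm s u i j) (am u w i j) - Z i j * am u w i j) = 0.
    by move/eqP: H; rewrite mulf_eq0 invr_eq0 pnatr_eq0 /= => /eqP.
  have := @psumr_eq0P _ _ xpredT _ (fun i _ => sumr_ge0 _ (fun j _ => nn i j)) H' i isT.
  move=> Hi; have := @psumr_eq0P _ _ xpredT _ (fun j _ => nn i j) Hi j isT.
  by move/eqP; rewrite subr_eq0 => /eqP.
rewrite big1 ?mulr0 // => i _; rewrite big1 // => j _; rewrite H subrr //.
Qed.

Theorem proposition2 (R : realType) (n : nat) (ustar : 'cV[R]_n) :
  ustar != 0 ->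
  (forall u : 'cV[R]_n, u != 0 -> spurious_stationary ustar u ->
     (forall j : 'I_n, ustar j 0 != 0 -> `|u j 0| <= `|ustar j 0|) /\
     [set w | dirderiv_zero (fobj ustar) u w] =
       [set w : 'cV[R]_n | forall j : 'I_n, Cj ustar u j (w j 0)]) /\
  [set w | dirderiv_zero (fobj ustar) 0 w] = [set: 'cV[R]_n].
Proof.
move=> s0; split; last first.
  apply/seteqP; split => w // _; apply/dd_iff.
  rewrite /Dval big1 ?mulr0 // => i _; rewrite big1 // => j _.
  by rewrite /am /phi !mxE !(mul0r, mulr0, addr0) normr0 if_same.
move=> u u0 [[Z [symZ SS] Zu] [us uns]].
have hs : forall i j, Z i j = Z j i.
  by move=> i j; have := congr1 (fun M : 'M[R]_n => M j i) symZ; rewrite mxE.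
have hS : forall i j, SignSet (Rm ustar u i j) (Z i j).
  by move=> i j; rewrite -entryE; exact: SS.
have hr : forall i, \sum_j Z i j * u j 0 = 0.
  by move=> i; have := congr1 (fun M : 'cV[R]_n => M i 0) Zu; rewrite !mxE.
have off : forall i, ustar i 0 = 0 -> u i 0 = 0.
  move=> i si.
  have e : \sum_j `|u i 0 * u j 0| = u i 0 * \sum_j Z i j * u j 0.
    rewrite mulr_sumr; apply: eq_bigr => j _.
    have := SS_abs (hS i j); rewrite /Rm si mul0r subr0 => <-; ring.
  rewrite hr mulr0 in e.
  have := @psumr_eq0P _ _ xpredT _ (fun j _ => normr_ge0 _) e i isT.
  by move/eqP; rewrite normr_eq0 mulf_eq0 orbb => /eqP.
pose sg_ := fun i => Num.sg (ustar i 0).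
pose x := fun i => sg_ i * u i 0.
pose p := fun i => `|ustar i 0|.
pose Z' := fun i j => sg_ i * sg_ j * Z i j.
have sq : forall j, sg_ j * (sg_ j * u j 0) = u j 0.
  move=> j; have [sj|sj] := eqVneq (ustar j 0) 0; first by rewrite (off _ sj) !mulr0.
  by rewrite mulrA -expr2 /sg_ sqr_sg sj mul1r.
have sgn1 : forall j, ustar j 0 != 0 -> sg_ j * sg_ j = 1.
  by move=> j sj; rewrite -expr2 /sg_ sqr_sg sj.
have H : Hyp x p Z'.
  split.
  - by move=> i; exact: normr_ge0.
  - by move=> i /normr0P/eqP si; rewrite /x /sg_ si sgr0 mul0r.
  - by move=> i j; rewrite /Z' hs (mulrC (sg_ i)).
  - move=> i j.
    have -> : x i * x j - p i * p j = (sg_ i * sg_ j) * Rm ustar u i j.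
      by rewrite /x /p /Rm /sg_ !normrEsg; ring.
    apply: SS_scale => //; rewrite /sg_ -sgrM.
    case: (ltgtP (ustar i 0 * ustar j 0) 0) => h.
    + by right; left; rewrite ltr0_sg.
    + by left; rewrite gtr0_sg.
    + by right; right; rewrite h sgr0.
  - move=> i.
    transitivity (sg_ i * \sum_j Z i j * u j 0); last by rewrite hr mulr0.
    rewrite mulr_sumr; apply: eq_bigr => j _.
    rewrite /Z' /x -[in RHS](sq j); ring.
have hA := absA H.
have Eu : forall i, x i = p i -> u i 0 = ustar i 0.
  move=> i e; have [si|si] := eqVneq (ustar i 0) 0; first by rewrite si off.
  by rewrite -sq -/(x i) e /p /sg_ mulr_sg_norm.
have Eu' : forall i, x i = - p i -> u i 0 = - ustar i 0.
  move=> i e; have [si|si] := eqVneq (ustar i 0) 0; first by rewrite si off ?oppr0.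
  by rewrite -sq -/(x i) e /p /sg_ mulrN mulr_sg_norm.
have ex1 : exists i, x i != p i.
  case: (pselect (exists i, x i != p i)) => // nE; exfalso; apply: us.
  apply/matrixP => i j; rewrite (ord1 j); apply: Eu.
  by apply/eqP/negPn/negP => h; apply: nE; exists i.
have ex2 : exists i, x i != - p i.
  case: (pselect (exists i, x i != - p i)) => // nE; exfalso; apply: uns.
  apply/matrixP => i j; rewrite (ord1 j) mxE; apply: Eu'.
  by apply/eqP/negPn/negP => h; apply: nE; exists i.
have S0 := absB H ex1 ex2.
have Zm1 : forall i j, 0 < p i -> 0 < p j -> x i * x j = p i * p j -> Z' i j = -1.
  move=> i j pi pj e.
  have ai := hA i; have aj := hA j.
  have e' : `|x i| * `|x j| = p i * p j by rewrite -normrM e ger0_norm // mulr_ge0 // ltW.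
  have ni := normr_ge0 (x i); have nj := normr_ge0 (x j).
  have ei : `|x i| = p i by nra.
  have ej : `|x j| = p j by nra.
  case: (lerP 0 (x i)) => hxi.
    have xi : x i = p i by rewrite -ei ger0_norm.
    have xj : x j = p j.
      by apply: (mulfI (negbT (gt_eqF pi))); rewrite -xi e xi.
    exact: (absC H S0 pi pj xi xj).
  have xi : - x i = p i by rewrite -ei ltr0_norm.
  have xj : - x j = p j.
    by apply: (mulfI (negbT (gt_eqF pi))); rewrite -xi mulrNN e xi.
  apply: (absC (Hyp_opp H) _ pi pj xi xj).
  by rewrite sumrN S0 oppr0.
have abs_x : forall j, ustar j 0 != 0 -> `|x j| = `|u j 0|.
  by move=> j sj; rewrite normrM /sg_ normr_sg sj mul1r.
have bnd : forall j, ustar j 0 != 0 -> `|u j 0| <= `|ustar j 0|.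
  by move=> j sj; rewrite -abs_x //; exact: hA.
split => //.
have ss : forall i j, ustar i 0 != 0 -> ustar j 0 != 0 ->
    Rm ustar u i j = 0 -> Z' i j = -1.
  move=> i j si sj R0; apply: Zm1; rewrite ?normr_gt0 //.
  move: R0; rewrite /x /p /Rm /sg_ !normrEsg => /eqP; rewrite subr_eq0 => /eqP e.
  have -> : Num.sg (ustar i 0) * u i 0 * (Num.sg (ustar j 0) * u j 0) =
            Num.sg (ustar i 0) * Num.sg (ustar j 0) * (u i 0 * u j 0) by ring.
  rewrite e; ring.
have Zsg : forall i j, ustar i 0 != 0 -> ustar j 0 != 0 -> Z i j = sg_ i * sg_ j * Z' i j.
  move=> i j si sj; rewrite /Z' !mulrA.
  have -> : sg_ i * sg_ j * sg_ i * sg_ j = (sg_ i * sg_ i) * (sg_ j * sg_ j) by ring.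
  by rewrite (sgn1 _ si) (sgn1 _ sj) !mul1r.
apply/seteqP; split => w /= Hw.
  have Hc := (Dval0 w hs hS hr).1 ((@dd_iff R n ustar u w).1 Hw).
  move=> j; rewrite /Cj; case: eqP => [sj|/eqP sj].
    apply/eqP/negPn/negP => wj; move/negP: u0; apply.
    have e : \sum_l `|w j 0 * u l 0| = w j 0 * \sum_l Z j l * u l 0.
      rewrite mulr_sumr; apply: eq_bigr => l _.
      have := Hc j l; rewrite /phi /Rm /am sj (off _ sj) !(mul0r, add0r, subrr) oppr0 eqxx.
      by move=> ->; ring.
    rewrite hr mulr0 in e.
    apply/eqP/matrixP => l k; rewrite (ord1 k) mxE.
    have := @psumr_eq0P _ _ xpredT _ (fun j _ => normr_ge0 _) e l isT.
    by move/eqP; rewrite normr_eq0 mulf_eq0 (negbTE wj) /= => /eqP.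
  case: eqP => [aj|_] //.
  have uj : u j 0 != 0 by rewrite -normr_eq0 aj normr_eq0.
  have Zjj : Z j j = -1.
    rewrite (Zsg _ _ sj sj) (sgn1 _ sj) mul1r; apply: ss => //.
    rewrite /Rm; apply/eqP; rewrite subr_eq0 -!expr2 -[X in X == _]real_normK ?num_real //.
    by rewrite aj real_normK ?num_real.
  have R0 : Rm ustar u j j = 0.
    rewrite /Rm; apply/eqP; rewrite subr_eq0 -!expr2 -[X in X == _]real_normK ?num_real //.
    by rewrite aj real_normK ?num_real.
  have := Hc j j; rewrite /phi R0 eqxx Zjj /am => e.
  have hneg : u j 0 * w j 0 <= 0.
    have : 0 <= `|u j 0 * w j 0 + w j 0 * u j 0| by exact: normr_ge0.
    rewrite e; lra.
  exists (Num.sg (u j 0) * w j 0).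
    have [t|t] := sg_pm uj; rewrite t.
      have : 0 < u j 0 by rewrite -sgr_gt0 t ltr01.
      move=> h; rewrite /= mul1r; nra.
    have : u j 0 < 0 by rewrite -sgr_lt0 t ltrN10.
    move=> h; rewrite /= mulN1r; nra.
  by rewrite mulrA -expr2 sqr_sg uj mul1r.
apply/dd_iff; apply/(Dval0 w hs hS hr) => i j.
have wz : forall k, ustar k 0 = 0 -> w k 0 = 0.
  by move=> k sk; have := Hw k; rewrite /Cj sk eqxx.
have [R0|R0] := eqVneq (Rm ustar u i j) 0; last first.
  by rewrite /phi (negbTE R0) (SS_sg (hS i j) R0).
rewrite /phi R0 eqxx.
have [si|si] := eqVneq (ustar i 0) 0.
  by rewrite /am (off _ si) (wz _ si) !(mul0r, mulr0, addr0) normr0.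
have [sj|sj] := eqVneq (ustar j 0) 0.
  by rewrite /am (off _ sj) (wz _ sj) !(mul0r, mulr0, addr0) normr0.
have e : u i 0 * u j 0 = ustar i 0 * ustar j 0 by apply/eqP; rewrite -subr_eq0; apply/eqP.
have bi := bnd _ si; have bj := bnd _ sj.
have e' : `|u i 0| * `|u j 0| = `|ustar i 0| * `|ustar j 0| by rewrite -!normrM e.
have pi : 0 < `|ustar i 0| by rewrite normr_gt0.
have pj : 0 < `|ustar j 0| by rewrite normr_gt0.
have ni := normr_ge0 (u i 0); have nj := normr_ge0 (u j 0).
have ai : `|u i 0| = `|ustar i 0| by nra.
have aj : `|u j 0| = `|ustar j 0| by nra.
have ui : u i 0 != 0 by rewrite -normr_eq0 ai normr_eq0.
have uj : u j 0 != 0 by rewrite -normr_eq0 aj normr_eq0.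
have := Hw i; rewrite /Cj (negbTE si) ai eqxx => -[ri hri wi].
have := Hw j; rewrite /Cj (negbTE sj) aj eqxx => -[rj hrj wj].
rewrite /am -wi -wj; symmetry; apply: (fin_sign ui uj e hri hrj).
exact: ss.
Qed.
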